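(* Let $p(\mathbf{Q},E)$ be an arbitrage-free answer-dependent pricing function, and let $g:\mathbb{R}_{\ge0}^{\mathcal{I}}\to\mathbb{R}_{\ge0}$ be monotone and subadditive. For $\mathbf{Q}\in B(\mathcal{L})$ let $\vec p(\mathbf{Q})=\langle p(\mathbf{Q},\mathbf{Q}(D))\mid D\in\mathcal{I}\rangle$. Then $p(\mathbf{Q})=g(\vec p(\mathbf{Q}))$ is an arbitrage-free instance-independent pricing function.
   Context: $\mathcal{I}$ is a countable nonempty set of database instances; queries are deterministic functions on $\mathcal{I}$; a query bundle is a finite tuple of queries from a language $\mathcal{L}$, evaluated componentwise; $B(\mathcal{L})$ is the set of bundles, closed under concatenation $\mathbf{Q}_1,\mathbf{Q}_2$. $g$ monotone: $x\le y$ coordinatewise implies $g(x)\le g(y)$; subadditive: $g(x+y)\le g(x)+g(y)$. Answer-dependent arbitrage-freeness of $p(\mathbf{Q},E)$: (i) for all $D\in\mathcal{I}$, if every $D'\in\mathcal{I}$ with $\mathbf{Q}_2(D')=\mathbf{Q}_2(D)$ satisfies $\mathbf{Q}_1(D')=\mathbf{Q}_1(D)$, then $p(\mathbf{Q}_2,\mathbf{Q}_2(D))\ge p(\mathbf{Q}_1,\mathbf{Q}_1(D))$; (ii) for all $D$, $p(\mathbf{Q},\mathbf{Q}(D))\le p(\mathbf{Q}_1,\mathbf{Q}_1(D))+p(\mathbf{Q}_2,\mathbf{Q}_2(D))$ where $\mathbf{Q}=\mathbf{Q}_1,\mathbf{Q}_2$. Instance-independent arbitrage-freeness of $p(\mathbf{Q})$: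 (i) if for all $D',D''\in\mathcal{I}$, $\mathbf{Q}_2(D')=\mathbf{Q}_2(D'')$ implies $\mathbf{Q}_1(D')=\mathbf{Q}_1(D'')$, then $p(\mathbf{Q}_2)\ge p(\mathbf{Q}_1)$; (ii) $p(\mathbf{Q}_1,\mathbf{Q}_2)\le p(\mathbf{Q}_1)+p(\mathbf{Q}_2)$. *)

(* Defs.v *)
From Stdlib Require List.
From HB Require Import structures.
From mathcomp Require Import all_boot all_order all_algebra.
Set Implicit Arguments. Unset Strict Implicit. Unset Printing Implicit Defensive.
Import Order.TTheory GRing.Theory Num.Theory.
Local Open Scope ring_scope.

(* Queries: deterministic functions I -> Ans (Ans an
   arbitrary answer type). *)

Definition eval_bundle (I Ans : Type) (Q : seq (I -> Ans)) (D : I) : seq Ans :=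
  map (fun q => q D) Q.

Definition in_bundles (I Ans : Type) (L : (I -> Ans) -> Prop) (Q : seq (I -> Ans)) : Prop :=
  List.Forall L Q.

Definition ad_arbitrage_free (R : realFieldType) (I Ans : Type)
    (L : (I -> Ans) -> Prop) (p : seq (I -> Ans) -> seq Ans -> R) : Prop :=
  (forall Q1 Q2, in_bundles L Q1 -> in_bundles L Q2 ->
     forall D : I,
       (forall D' : I, eval_bundle Q2 D' = eval_bundle Q2 D ->
                       eval_bundle Q1 D' = eval_bundle Q1 D) ->
       p Q1 (eval_bundle Q1 D) <= p Q2 (eval_bundle Q2 D))
  /\
  (forall Q1 Q2, in_bundles L Q1 -> in_bundles L Q2 ->
     forall D : I,
       p (Q1 ++ Q2) (eval_bundle (Q1 ++ Q2) D)
         <= p Q1 (eval_bundle Q1 D) + p Q2 (eval_bundle Q2 D)).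

Definition ii_arbitrage_free (R : realFieldType) (I Ans : Type)
    (L : (I -> Ans) -> Prop) (p : seq (I -> Ans) -> R) : Prop :=
  (forall Q1 Q2, in_bundles L Q1 -> in_bundles L Q2 ->
       (forall D' D'' : I, eval_bundle Q2 D' = eval_bundle Q2 D'' ->
                           eval_bundle Q1 D' = eval_bundle Q1 D'') ->
       p Q1 <= p Q2)
  /\
  (forall Q1 Q2, in_bundles L Q1 -> in_bundles L Q2 ->
       p (Q1 ++ Q2) <= p Q1 + p Q2).

Definition nonneg_vec (R : realFieldType) (I : Type) (x : I -> R) : Prop :=
  forall i, 0 <= x i.

Definition nonneg_valued (R : realFieldType) (I : Type) (g : (I -> R) -> R) : Prop :=
  forall x, nonneg_vec x -> 0 <= g x.

Definition monotone_vec (R : realFieldType) (I : Type) (g : (I -> R) -> R) : Prop :=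
  forall x y, nonneg_vec x -> nonneg_vec y -> (forall i, x i <= y i) -> g x <= g y.

Definition subadditive_vec (R : realFieldType) (I : Type) (g : (I -> R) -> R) : Prop :=
  forall x y, nonneg_vec x -> nonneg_vec y -> g (fun i => x i + y i) <= g x + g y.

Definition price_vec (R : realFieldType) (I Ans : Type)
    (p : seq (I -> Ans) -> seq Ans -> R) (Q : seq (I -> Ans)) : I -> R :=
  fun D => p Q (eval_bundle Q D).

(* Main.v *)
Require Import Defs.
From mathcomp Require Import all_boot all_order all_algebra.
Import Order.TTheory GRing.Theory Num.Theory.
Local Open Scope ring_scope.

Lemma in_bundles_cat (I Ans : Type) (L : (I -> Ans) -> Prop) Q1 Q2 :
  in_bundles L Q1 -> in_bundles L Q2 -> in_bundles L (Q1 ++ Q2).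
Proof. rewrite /in_bundles => H1 H2; apply List.Forall_app; split => //. Qed.

Theorem lemma16 (R : realFieldType) (I : countType) (D0 : I) (Ans : Type)
  (L : (I -> Ans) -> Prop)
  (p : seq (I -> Ans) -> seq Ans -> R) (g : (I -> R) -> R) :
  (forall Q E, in_bundles L Q -> 0 <= p Q E) ->
  ad_arbitrage_free L p ->
  nonneg_valued g -> monotone_vec g -> subadditive_vec g ->
  (forall Q, in_bundles L Q -> 0 <= g (price_vec p Q)) /\
  ii_arbitrage_free L (fun Q => g (price_vec p Q)).
Proof.
move=> p0 [Hm Hs] gnn gmon gsub.
have pvnn : forall Q, in_bundles L Q -> nonneg_vec (price_vec p Q).
  by move=> Q HQ D; apply: p0.
split; first by move=> Q HQ; apply: gnn; apply: pvnn.
split.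
- move=> Q1 Q2 H1 H2 Hd; apply: gmon; try exact: pvnn.
  move=> D; rewrite /price_vec; apply: Hm => // D' HD'; exact: Hd.
- move=> Q1 Q2 H1 H2.
  apply: le_trans (gsub _ _ (pvnn _ H1) (pvnn _ H2)).
  apply: gmon.
  + move=> D; rewrite /price_vec; apply: p0; exact: (in_bundles_cat _ _ _ _ _ H1 H2).
  + by move=> D /=; apply: addr_ge0; apply: p0.
  + by move=> D; rewrite /price_vec; apply: Hs.
Qed.
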